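(* Let $(\mathbb{S}^2,d_H)$ be the doubled hexagon described in the context. The minimum of the lengths of the nonconstant restricted closed geodesics of $(\mathbb{S}^2,d_H)$ equals $4$. This minimum is attained, for instance, by the restricted closed geodesic whose projection $p\circ\gamma$ traverses the vertical segment from $-i$ to $i$ in $H$ (a segment orthogonal to two opposite edges of $H$) once in each copy of $H$, i.e. back and forth.
   Context: Identify $\mathbb{R}^2$ with $\mathbb{C}$. Let $H$ be the closed regular hexagon with vertices $\frac{2}{\sqrt3}e^{ik\pi/3}$, $k=0,\dots,5$ (so the distance from the center to each edge is $1$). For $k=0,1,2$ let $L_k=\{te^{i(\pi/6+2k\pi/3)}: t\in\mathbb{R}\}$, $\overline{L_k}=\{te^{i(\pi/6+2k\pi/3)}: t\in[0,1]\}$, $\pi_k$ the orthogonal projection of $\mathbb{C}$ onto $L_k$, and for a set $A\subset H$ let $\overline{\pi_k}(A)=\pi_k(A)\cap\overline{L_k}$; $|\cdot|$ denotes one-dimensional Lebesgue measure on $L_k$. For a straight segment $\sigma\subset H$ set $\ell(\sigma)=\sum_{k=0}^{2}|\overline{\pi_k}(\sigma)|$ (this is the length of $\sigma$ for the pseudo-metric $d_H$ on $H$ defined as the infimum of $\sum_k|\overline{\pi_k}(\gamma([0,1]))|$ over piecewise smooth curves $\gamma$ joining two points). Let $\mathbb{S}^2$ be obtained from two copies $H_1,H_2$ of $H$ by identifying corresponding boundary points, and let $p:\mathbb{S}^2\to H$ be the canonical projection; let $V$ be the set of the six vertices. A restricted closed geodesic is a nonconstant closed curve $\gamma$ in $\mathbb{S}^2\setminus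 V$ made of finitely many straight segments $\sigma_1,\dots,\sigma_N$ (cyclically ordered), each contained in one copy $H_j$ and joining two points in the interiors of edges, consecutive segments lying in different copies (so $N$ is even), such that $p\circ\gamma$ is a periodic billiard trajectory in $H$: at each edge point the direction of the next segment is the mirror reflection across that edge of the direction of the previous segment (angle of incidence equals angle of reflection). Its length is $\sum_{j=1}^N\ell(p(\sigma_j))$. *)

(* Defs.v *)
From HB Require Import structures.
From mathcomp Require Import all_boot all_order all_algebra.
From mathcomp Require Import all_classical all_reals all_analysis.
Set Implicit Arguments. Unset Strict Implicit. Unset Printing Implicit Defensive.
Import Order.TTheory GRing.Theory Num.Theory.
Local Open Scope classical_set_scope.
Local Open Scope ring_scope.

Section Hexagon.
Variable R : realType.

(* Points of the plane R^2 = C, as pairs (real part, imaginary part). *)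
Definition pt := (R * R)%type.
Definition padd (z w : pt) : pt := (z.1 + w.1, z.2 + w.2).
Definition psub (z w : pt) : pt := (z.1 - w.1, z.2 - w.2).
Definition pscale (a : R) (z : pt) : pt := (a * z.1, a * z.2).
Definition pdot (z w : pt) : R := z.1 * w.1 + z.2 * w.2.
Definition expi (theta : R) : pt := (cos theta, sin theta).

Definition hvertex (k : nat) : pt :=
  pscale (2 / Num.sqrt 3) (expi (k%:R * pi / 3)).

Definition H : set pt :=
  [set z | exists lam : 'I_6 -> R,
     (forall k, 0 <= lam k) /\ \sum_(k < 6) lam k = 1 /\
     z = (\sum_(k < 6) lam k * (hvertex k).1, \sum_(k < 6) lam k * (hvertex k).2)].

Definition edge_dir (k : 'I_6) : pt := psub (hvertex k.+1) (hvertex k).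
Definition edge_interior (k : 'I_6) : set pt :=
  [set z | exists s : R, 0 < s < 1 /\ z = padd (hvertex k) (pscale s (edge_dir k))].

Definition segment (P Q : pt) : set pt :=
  [set z | exists s : R, 0 <= s <= 1 /\ z = padd P (pscale s (psub Q P))].

Definition reflect_dir (w d : pt) : pt :=
  psub (pscale (2 * pdot d w / pdot w w) w) d.

(* L_k has unit direction e^{i(pi/6 + 2 k pi/3)}; a point t e^{i(...)} of L_k
   is identified with the coordinate t, so Lebesgue measure on L_k is Lebesgue
   measure on the coordinate t. *)
Definition Ldir (k : nat) : pt := expi (pi / 6 + 2 * k%:R * pi / 3).

(* bar pi_k (A) = pi_k(A) cap bar L_k, in the coordinate t *)
Definition proj_bar (k : nat) (A : set pt) : set R :=
  [set t | 0 <= t <= 1 /\ exists2 z, A z & t = pdot z (Ldir k)].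

Definition seg_length (P Q : pt) : \bar R :=
  (\sum_(k < 3) lebesgue_measure (proj_bar k (segment P Q)))%E.

(* A restricted closed geodesic with N segments is encoded by the cyclic
   sequence of its break points P 0, ..., P (N-1) (indices taken mod N);
   segment sigma_(j+1) = [P j, P (j+1)] lies in copy H_(j mod 2). *)
Definition restricted_closed_geodesic (N : nat) (P : nat -> pt) : Prop :=
  (0 < N)%N /\ ~~ odd N /\
  (forall j, P (j + N)%N = P j) /\
  (forall j, P j <> P j.+1) /\
  (forall j, segment (P j) (P j.+1) `<=` H) /\
  (forall j, exists k : 'I_6, edge_interior k (P j.+1) /\
      exists2 lam : R, 0 < lam &
        psub (P j.+2) (P j.+1) = pscale lam (reflect_dir (edge_dir k) (psub (P j.+1) (P j)))).

Definition geodesic_length (N : nat) (P : nat -> pt) : \bar R :=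
  (\sum_(j < N) seg_length (P j) (P j.+1))%E.

(* the vertical back-and-forth geodesic: -i -> i (copy H_1) -> -i (copy H_2) *)
Definition vertical_geodesic (j : nat) : pt := if odd j then (0, 1) else (0, -1).

End Hexagon.

(* Main.v *)
Require Import Defs.
From HB Require Import structures.
From mathcomp Require Import all_boot all_order all_algebra.
From mathcomp Require Import all_classical all_reals all_analysis.
From mathcomp Require Import lra ring.
From Stdlib Require Import Classical_Prop Classical_Pred_Type.
Set Implicit Arguments. Unset Strict Implicit. Unset Printing Implicit Defensive.
Import Order.TTheory GRing.Theory Num.Theory.
Local Open Scope classical_set_scope.
Local Open Scope ring_scope.

Section Abs.
Variable R : rcfType.

Record tri := Tri { a0 : R; a1 : R; a2 : R }.

Definition onE (k : nat) (p : tri) : Prop := exists s : R, 0 < s < 1 /\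
  match k with
  | 0 => a0 p = 1 /\ a1 p = -1 + s /\ a2 p = - s
  | 1 => a0 p = 1 - s /\ a1 p = s /\ a2 p = -1
  | 2 => a0 p = - s /\ a1 p = 1 /\ a2 p = -1 + s
  | 3 => a0 p = -1 /\ a1 p = 1 - s /\ a2 p = s
  | 4 => a0 p = -1 + s /\ a1 p = - s /\ a2 p = 1
  | 5 => a0 p = s /\ a1 p = -1 /\ a2 p = 1 - s
  | _ => False
  end.

Definition Sref (k : nat) (c : tri) : tri :=
  match k with
  | 0 | 3 => Tri (- a0 c) (- a2 c) (- a1 c)
  | 1 | 4 => Tri (- a1 c) (- a0 c) (- a2 c)
  | _ => Tri (- a2 c) (- a1 c) (- a0 c)
  end.

Definition tsub (p q : tri) := Tri (a0 p - a0 q) (a1 p - a1 q) (a2 p - a2 q).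
Definition tscale (l : R) (p : tri) := Tri (l * a0 p) (l * a1 p) (l * a2 p).
Definition mx (x : R) := Num.max 0 x.
Definition D (p q : tri) : R :=
  `|mx (a0 p) - mx (a0 q)| + `|mx (a1 p) - mx (a1 q)| + `|mx (a2 p) - mx (a2 q)|.

Lemma mx_pos x : 0 <= x -> mx x = x.
Proof. by move=> h; rewrite /mx; apply/max_idPr. Qed.
Lemma mx_neg x : x <= 0 -> mx x = 0.
Proof. by move=> h; rewrite /mx; apply/max_idPl. Qed.

Lemma onE_lt6 k p : onE k p -> (k < 6)%N.
Proof. by case: k => [|[|[|[|[|[|k]]]]]] //= [s [_ []]]. Qed.

Ltac dE h := let s := fresh "s" in let hs := fresh "hs" in
  let e0 := fresh "e0" in let e1 := fresh "e1" in let e2 := fresh "e2" in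
  case: h => s [hs [e0 [e1 e2]]].

Lemma onE_bnd k p : onE k p ->
  [/\ -1 <= a0 p <= 1, -1 <= a1 p <= 1, -1 <= a2 p <= 1 & a0 p + a1 p + a2 p = 0].
Proof.
case: k => [|[|[|[|[|[|k]]]]]] h; try (by case: h => s [_ []]);
dE h; rewrite e0 e1 e2; split; lra.
Qed.

Lemma onE_uniq k k' p : onE k p -> onE k' p -> k = k'.
Proof.
case: k => [|[|[|[|[|[|k]]]]]] h; try (by case: h => s [_ []]);
case: k' => [|[|[|[|[|[|k']]]]]] h'; try (by case: h' => s [_ []]); try done;
dE h; dE h'; exfalso; lra.
Qed.

Ltac mxs := repeat match goal with |- context [mx ?x] =>
  first [rewrite (@mx_pos x); last lra | rewrite (@mx_neg x); last lra] end.

Lemma absN (u : R) : - u <= `|u|.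
Proof. by rewrite -normrN ler_norm. Qed.

Ltac absg := repeat match goal with |- context [@Num.norm _ _ ?u] =>
  let h1 := fresh "h" in let h2 := fresh "h" in let v := fresh "v" in
  have h1 : u <= `|u| := ler_norm u; have h2 : -u <= `|u| := absN u;
  move: h1 h2; move: (`|u|) => v h1 h2 end.

Definition far (a b : nat) : bool :=
  (a, b) \in [:: (0,2); (2,0); (0,4); (4,0); (2,4); (4,2); (0,3); (3,0);
                (2,5); (5,2); (4,1); (1,4)]%N.

Lemma far_D a b p q : far a b -> onE a p -> onE b q -> 2 <= D p q.
Proof.
rewrite /far; case: a => [|[|[|[|[|[|a]]]]]]; case: b => [|[|[|[|[|[|b]]]]]] //= _ hp hq;
dE hp; dE hq; rewrite /D e0 e1 e2 e3 e4 e5; mxs; absg; lra.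
Qed.

Definition side (a : nat) : bool := a \in [:: 1; 3; 5]%N.

Lemma pair_D a b c p q r : side a -> side b -> side c -> a != b -> b != c -> a != c ->
  onE a p -> onE b q -> onE c r -> 2 <= D p q + D q r.
Proof.
rewrite /side; case: a => [|[|[|[|[|[|a]]]]]] //; case: b => [|[|[|[|[|[|b]]]]]] //;
case: c => [|[|[|[|[|[|c]]]]]] // _ _ _ _ _ _ hp hq hr;
dE hp; dE hq; dE hr; rewrite /D e0 e1 e2 e3 e4 e5 e6 e7 e8; mxs; absg; lra.
Qed.

Lemma tri_eq p q : p = q -> [/\ a0 p = a0 q, a1 p = a1 q & a2 p = a2 q].
Proof. by move=> ->. Qed.

Lemma aba a b p q r l : side a -> side b -> a != b -> 0 < l ->
  onE a p -> onE b q -> onE a r -> tsub r q = tscale l (Sref b (tsub q p)) -> False.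
Proof.
rewrite /side; case: a => [|[|[|[|[|[|a]]]]]] //; case: b => [|[|[|[|[|[|b]]]]]] //
 _ _ _ hl hp hq hr /tri_eq [] /=;
dE hp; dE hq; dE hr; rewrite e0 e1 e2 e3 e4 e5 e6 e7 e8 => f0 f1 f2; nra.
Qed.

Lemma D_ge0 p q : 0 <= D p q.
Proof. by rewrite /D !addr_ge0. Qed.

Lemma D_sym p q : D p q = D q p.
Proof. by rewrite /D (distrC (mx (a0 p))) (distrC (mx (a1 p))) (distrC (mx (a2 p))). Qed.

Lemma D_tri p q r : D p r <= D p q + D q r.
Proof.
rewrite /D.
have h0 := ler_distD (mx (a0 q)) (mx (a0 p)) (mx (a0 r)).
have h1 := ler_distD (mx (a1 q)) (mx (a1 p)) (mx (a1 r)).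
have h2 := ler_distD (mx (a2 q)) (mx (a2 p)) (mx (a2 r)).
lra.
Qed.

Lemma D_refl p : D p p = 0.
Proof. by rewrite /D !subrr normr0 !addr0. Qed.

Section Seq.
Variable x : nat -> tri.

Lemma range_tri i m : D (x i) (x (i + m)) <= \sum_(i <= j < i + m) D (x j) (x j.+1).
Proof.
elim: m => [|m IH]; first by rewrite addn0 D_refl big_geq.
rewrite addnS big_nat_recr ?leq_addr //=.
apply: le_trans (D_tri (x i) (x (i + m)) (x (i + m).+1)) _.
by rewrite lerD2r.
Qed.

Variable N : nat.
Hypothesis Nper : forall j, x (j + N) = x j.

Lemma per_mod j : x j = x (j %% N)%N.
Proof.
rewrite {1}(divn_eq j N); elim: (j %/ N)%N => [|q IH]; first by rewrite mul0n add0n.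
by rewrite mulSn -addnA addnC Nper.
Qed.

Definition Lsum := \sum_(j < N) D (x j) (x j.+1).

Lemma cyc2 a b : (0 < N)%N -> 2 * D (x a) (x b) <= Lsum.
Proof.
move=> N0.
suff H : forall a b, (a <= b)%N -> (b < N)%N -> 2 * D (x a) (x b) <= Lsum.
  rewrite (per_mod a) (per_mod b).
  have ha : (a %% N < N)%N by rewrite ltn_pmod.
  have hb : (b %% N < N)%N by rewrite ltn_pmod.
  case: (leqP (a %% N)%N (b %% N)%N) => h; first exact: H.
  by rewrite D_sym; apply: H => //; apply: ltnW.
move=> {}a {}b ab bN.
rewrite /Lsum -(big_mkord xpredT (fun j => D (x j) (x j.+1))).
have aN : (a <= N)%N by apply: leq_trans ab (ltnW bN).
rewrite (@big_cat_nat _ _ _ a 0 N) //=.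
rewrite (@big_cat_nat _ _ _ b a N) //=; last exact: ltnW.
have h1 := range_tri a (b - a); rewrite subnKC // in h1.
have h2 := range_tri b (N - b); rewrite subnKC in h2; last exact: ltnW.
have h3 := range_tri 0 a; rewrite add0n in h3.
have h4 : x N = x 0 by rewrite -[N]add0n Nper.
rewrite h4 in h2.
have h5 := D_tri (x b) (x 0) (x a).
rewrite [D (x b) (x a)]D_sym in h5.
lra.
Qed.

Lemma shift_sum (f : nat -> R) : f N = f 0 -> \sum_(j < N) f j.+1 = \sum_(j < N) f j.
Proof.
move=> h.
case: N h => [|n] h; first by rewrite !big_ord0.
by rewrite big_ord_recr /= h big_ord_recl /= addrC.
Qed.

End Seq.

Section Main.
Variable x : nat -> tri.
Variable N : nat.
Hypothesis Npos : (0 < N)%N.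
Hypothesis Neven : ~~ odd N.
Hypothesis Nper : forall j, x (j + N) = x j.
Hypothesis Hne : forall j, x j <> x j.+1.
Hypothesis Hstep : forall j, exists k, onE k (x j.+1) /\ exists l, 0 < l /\
  tsub (x j.+2) (x j.+1) = tscale l (Sref k (tsub (x j.+1) (x j))).

Definition c j := tsub (x j.+1) (x j).

Lemma xN0 : x N = x 0.
Proof. by rewrite -[N]add0n Nper. Qed.

Lemma allE j : exists k, onE k (x j).
Proof.
case: j => [|j]; last by case: (Hstep j) => k [hk _]; exists k.
case: (Hstep N.-1) => k [hk _]; exists k; by rewrite -xN0 -(prednK Npos).
Qed.

Lemma sum0 j : a0 (x j) + a1 (x j) + a2 (x j) = 0.
Proof. by case: (allE j) => k /onE_bnd []. Qed.

Lemma csum0 j : a0 (c j) + a1 (c j) + a2 (c j) = 0.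
Proof. rewrite /c /=; have := sum0 j; have := sum0 j.+1; lra. Qed.

Definition dot (p q : tri) := a0 p * a0 q + a1 p * a1 q + a2 p * a2 q.

Lemma nrm_pos j : 0 < dot (c j) (c j).
Proof.
rewrite /dot.
have := @Hne j; rewrite /c; case: (x j) => p0 p1 p2; case: (x j.+1) => q0 q1 q2 /= hne.
have sq (z : R) : z != 0 -> 0 < z * z by move=> hz; rewrite lt_def mulf_neq0 //= -expr2 sqr_ge0.
have s0 := sqr_ge0 (q0 - p0); have s1 := sqr_ge0 (q1 - p1); have s2 := sqr_ge0 (q2 - p2).
rewrite !expr2 in s0 s1 s2.
case: (eqVneq (q0 - p0) 0) => h0; last by have := sq _ h0; lra.
case: (eqVneq (q1 - p1) 0) => h1; last by have := sq _ h1; lra.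
case: (eqVneq (q2 - p2) 0) => h2; last by have := sq _ h2; lra.
exfalso; apply: hne; congr Tri; lra.
Qed.

Section Psi.
Variable X : tri.
Hypothesis Hloc : forall j k, onE k (x j.+1) ->
  0 <= dot (tsub (x j.+1) X) (tsub (Sref k (c j)) (c j)).

Definition psi j := dot (tsub (x j) X) (c j) / Num.sqrt (dot (c j) (c j)).

Lemma psi_step j : psi j < psi j.+1.
Proof.
case: (Hstep j) => k [hk [l [hl e]]].
have hL := Hloc hk.
have n0 := nrm_pos j.
have s0 : 0 < Num.sqrt (dot (c j) (c j)) by rewrite sqrtr_gt0.
have ec : c j.+1 = tscale l (Sref k (c j)) by [].
have en : dot (c j.+1) (c j.+1) = l ^+ 2 * dot (c j) (c j).
  rewrite ec /dot /tscale /Sref; case: k {hk hL e ec} => [|[|[|[|[|k]]]]] /=; ring.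
have e1 : psi j.+1 = dot (tsub (x j.+1) X) (Sref k (c j)) / Num.sqrt (dot (c j) (c j)).
  rewrite /psi en sqrtrM ?sqr_ge0 // sqrtr_sqr ger0_norm ?ltW // ec.
  rewrite /dot /tscale /=; field; apply/andP; split; rewrite gt_eqF //.
have e2 : psi j = (dot (tsub (x j.+1) X) (c j) - dot (c j) (c j)) / Num.sqrt (dot (c j) (c j)).
  rewrite /psi; congr (_ / _); rewrite /dot /c /=; ring.
rewrite e1 e2 ltr_pM2r ?invr_gt0 //.
move: hL n0; rewrite /dot /c /=; lra.
Qed.

Lemma psi_contra : False.
Proof.
have H : forall m, psi 0 < psi m.+1.
  elim=> [|m IH]; first exact: psi_step.
  exact: lt_trans IH (psi_step m.+1).
have := H N.-1; rewrite (prednK Npos).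
have -> : psi N = psi 0.
  rewrite /psi /c xN0 -[N.+1]add1n Nper //.
by rewrite ltxx.
Qed.
End Psi.

Definition pr (i : nat) (p : tri) := match i with 0 => a0 p | 1 => a1 p | _ => a2 p end.

Lemma pr_sub i p q : pr i (tsub p q) = pr i p - pr i q.
Proof. by case: i => [|[|i]]. Qed.
Lemma pr_scale i l p : pr i (tscale l p) = l * pr i p.
Proof. by case: i => [|[|i]]. Qed.

Lemma same_gen k ni ti v :
 (forall p, onE k p -> pr ni p = v) ->
 (forall k' p, onE k' p -> pr ni p = v -> k' = k) ->
 (forall q, pr ni q = 0 -> a0 q + a1 q + a2 q = 0 -> Sref k q = q) ->
 (forall q, pr ni q = 0 -> a0 q + a1 q + a2 q = 0 -> pr ti q = 0 -> q = Tri 0 0 0) ->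
 forall j, onE k (x j) -> onE k (x j.+1) -> False.
Proof.
move=> Hv Hu HS H0 j hj hj1.
set u := pr ti (c j).
have u0 : u != 0.
  apply/eqP => u0; apply: (@Hne j).
  have := H0 (c j); rewrite /c pr_sub (Hv _ hj) (Hv _ hj1) subrr => /(_ erefl).
  move=> /(_ (csum0 j)) /(_ u0) /tri_eq [] /=.
  case: (x j) => ? ? ?; case: (x j.+1) => ? ? ? /= e0 e1 e2; congr Tri; lra.
have uu : 0 < u * u by rewrite lt_def mulf_neq0 //= -expr2 sqr_ge0.
have H : forall m, [/\ pr ni (x (j + m)) = v, pr ni (x (j + m).+1) = v,
   0 < pr ti (c (j + m)) * u & 0 < (pr ti (x (j + m).+1) - pr ti (x j)) * u].
  elim=> [|m [h1 h2 h3 h4]].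
    rewrite addn0; split; [exact: Hv | exact: Hv | by [] | ].
    by rewrite -pr_sub.
  case: (Hstep (j + m)) => k' [hk' [l [hl e]]].
  have ek : k' = k by apply: Hu hk' h2.
  subst k'.
  have ecm : c (j + m).+1 = tscale l (c (j + m)).
    rewrite /c e HS // ?csum0 //.
    by rewrite -/(c (j + m)) /c pr_sub h1 h2 subrr.
  have := f_equal (pr ni) ecm; have := f_equal (pr ti) ecm.
  rewrite /c !pr_sub !pr_scale h2 -!/(c _) -addnS.
  rewrite [pr ni (tsub _ _)]pr_sub h1 h2 subrr mulr0 => et en.
  rewrite addnS; rewrite addnS in et en; split.
  - exact: h2.
  - lra.
  - by rewrite et -mulrA mulr_gt0.
  - have : 0 < (pr ti (x (j + m).+2) - pr ti (x (j + m).+1)) * u by rewrite et -mulrA mulr_gt0.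
    move: h4; lra.
have := H N.-1; rewrite -addnS (prednK Npos) Nper => -[_ _ _]; rewrite subrr mul0r ltxx.
by [].
Qed.
Lemma same_side a j : side a -> onE a (x j) -> onE a (x j.+1) -> False.
Proof.
rewrite /side; case: a => [|[|[|[|[|[|a]]]]]] //= _.
- apply: (@same_gen 1 2 0 (-1)).
  + move=> p hp; dE hp; simpl; lra.
  + move=> k' p hp e; case: k' hp e => [|[|[|[|[|[|k']]]]]] hp e //; try (by case: hp => ? [_ []]); dE hp; simpl in e; exfalso; lra.
  + by case=> q0 q1 q2 /= h0 h1; congr Tri; lra.
  + by case=> q0 q1 q2 /= h0 h1 h2; congr Tri; lra.
- apply: (@same_gen 3 0 1 (-1)).
  + move=> p hp; dE hp; simpl; lra.
  + move=> k' p hp e; case: k' hp e => [|[|[|[|[|[|k']]]]]] hp e //; try (by case: hp => ? [_ []]); dE hp; simpl in e; exfalso; lra.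
  + by case=> q0 q1 q2 /= h0 h1; congr Tri; lra.
  + by case=> q0 q1 q2 /= h0 h1 h2; congr Tri; lra.
- apply: (@same_gen 5 1 0 (-1)).
  + move=> p hp; dE hp; simpl; lra.
  + move=> k' p hp e; case: k' hp e => [|[|[|[|[|[|k']]]]]] hp e //; try (by case: hp => ? [_ []]); dE hp; simpl in e; exfalso; lra.
  + by case=> q0 q1 q2 /= h0 h1; congr Tri; lra.
  + by case=> q0 q1 q2 /= h0 h1 h2; congr Tri; lra.
Qed.

Lemma xN1 : x N.+1 = x 1.
Proof. by rewrite -[N.+1]add1n Nper. Qed.

Lemma caseD : (forall j, ~ onE 0 (x j) /\ ~ onE 2 (x j) /\ ~ onE 4 (x j)) ->
  4 <= Lsum x N.
Proof.
move=> Hc.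
have sideE j k : onE k (x j) -> side k.
  move=> hk; have := onE_lt6 hk; have [h0 [h2 h4]] := Hc j.
  case: k hk => [|[|[|[|[|[|k]]]]]] //.
have pairj j : 2 <= D (x j) (x j.+1) + D (x j.+1) (x j.+2).
  case: (allE j) => a ha.
  case: (Hstep j) => k [hk [l [hl e]]].
  case: (Hstep j.+1) => k2 [hk2 _].
  have sa := sideE _ _ ha; have sk := sideE _ _ hk; have sk2 := sideE _ _ hk2.
  have ak : a != k by apply/eqP => ak; subst k; exact: (same_side sa ha hk).
  have kk2 : k != k2 by apply/eqP => kk; subst k2; exact: (same_side sk hk hk2).
  have ak2 : a != k2.
    by apply/eqP => ak2; subst k2; exact: (aba sa sk ak hl ha hk hk2 e).
  exact: pair_D sa sk sk2 ak kk2 ak2 ha hk hk2.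
have N2 : N != 2%N.
  apply/eqP => N2.
  case: (allE 0) => a ha.
  case: (Hstep 0) => k [hk [l [hl e]]].
  have sa := sideE _ _ ha; have sk := sideE _ _ hk.
  have ak : a != k by apply/eqP => ak; subst k; exact: (same_side sa ha hk).
  have h2 : x 2 = x 0 by rewrite -N2 xN0.
  rewrite h2 in e.
  exact: (aba sa sk ak hl ha hk ha e).
have N4 : (4 <= N)%N.
  move: Npos Neven N2; case: N => [|[|[|[|n]]]] //.
have H2 : \sum_(j < N) (D (x j) (x j.+1) + D (x j.+1) (x j.+2)) = 2 * Lsum x N.
  rewrite big_split /= (shift_sum (f := fun j => D (x j) (x j.+1))) /=; last by rewrite xN0 xN1.
  by rewrite /Lsum mulr2n mulrDl mul1r.
have H3 : \sum_(j < N) (2 : R) <= \sum_(j < N) (D (x j) (x j.+1) + D (x j.+1) (x j.+2)).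
  by apply: ler_sum => j _; exact: pairj.
rewrite H2 sumr_const card_ord in H3.
have : (4 : R) <= N%:R by rewrite ler_nat.
rewrite -mulr_natr in H3.
lra.
Qed.

Definition nofar := forall a b ka kb, far ka kb -> onE ka (x a) -> onE kb (x b) -> False.

Lemma corner_gen k0 X : nofar -> (exists j0, onE k0 (x j0)) ->
  (forall j k, onE k (x j.+1) -> ~~ far k0 k -> 0 <= dot (tsub (x j.+1) X) (tsub (Sref k (c j)) (c j))) ->
  False.
Proof.
move=> nf [j0 h0] Hl.
apply: (@psi_contra X) => j k hk.
apply: (Hl _ _ hk); apply/negP => fk; exact: nf j0 j.+1 k0 k fk h0 hk.
Qed.

Ltac cornertac j k hk :=
  case: (allE j) => ? /onE_bnd [? ? ? ?];
  case: k hk => [|[|[|[|[|[|k]]]]]] hk //= _; try (by case: hk => ? [_ []]);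
  rewrite /dot /c /=; case: hk => ? [? [-> [-> ->]]]; lra.

Lemma main_abs : 4 <= Lsum x N.
Proof.
case: (Classical_Prop.classic nofar) => nf; last first.
  move/Classical_Pred_Type.not_all_ex_not: nf => [a /Classical_Pred_Type.not_all_ex_not [b
    /Classical_Pred_Type.not_all_ex_not [ka /Classical_Pred_Type.not_all_ex_not [kb H]]]].
  case: (Classical_Prop.classic (far ka kb)) => fk; last by exfalso; apply: H => /negP.
  case: (Classical_Prop.classic (onE ka (x a))) => ha; last by exfalso; apply: H.
  case: (Classical_Prop.classic (onE kb (x b))) => hb; last by exfalso; apply: H.
  have := far_D fk ha hb; have := cyc2 Nper a b Npos; lra.
case: (Classical_Prop.classic (exists j, onE 0 (x j))) => h0.
  exfalso; apply: (@corner_gen 0 (Tri 2 (-1) (-1))) => // j k hk; cornertac j k hk.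
case: (Classical_Prop.classic (exists j, onE 2 (x j))) => h2.
  exfalso; apply: (@corner_gen 2 (Tri (-1) 2 (-1))) => // j k hk; cornertac j k hk.
case: (Classical_Prop.classic (exists j, onE 4 (x j))) => h4.
  exfalso; apply: (@corner_gen 4 (Tri (-1) (-1) 2)) => // j k hk; cornertac j k hk.
apply: caseD => j; split; [|split] => h; [apply: h0 | apply: h2 | apply: h4]; by exists j.
Qed.
End Main.
End Abs.

Section Geo.
Variable R : realType.
Notation r := (Num.sqrt (3 : R)).

Lemma r_gt0 : 0 < r. Proof. by rewrite sqrtr_gt0. Qed.
Lemma r2 : r * r = 3.
Proof. by rewrite -expr2 sqr_sqrtr. Qed.
Lemma r_neq0 : r != 0. Proof. by rewrite gt_eqF // r_gt0. Qed.

Lemma cos_pi3 : cos (pi / 3 : R) = 1 / 2.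
Proof.
set t := pi / 3 : R.
have pi0 := @pi_gt0 R.
have c0 : 0 < cos t.
  apply: cos_gt0_pihalf; rewrite /t; apply/andP; split; lra.
have e : t *+ 2 + t = pi by rewrite /t; field.
have := cosD (t *+ 2) t; rewrite e cospi cos_mulr2n sin_mulr2n.
have := cos2Dsin2 t; rewrite !expr2 => h.
set c := cos t in c0 h *; set s := sin t in h *.
move=> h2; have h3 : (c + 1) * (2 * c - 1) * (2 * c - 1) = 0 by rewrite mulr2n in h2; nra.
move/eqP: h3; rewrite !mulf_eq0 => /orP [/orP [h4|h4]|h4]; move/eqP: h4 => h4; lra.
Qed.

Lemma sin_pi3 : sin (pi / 3 : R) = r / 2.
Proof.
set t := pi / 3 : R.
have pi0 := @pi_gt0 R.
have s0 : 0 < sin t by apply: sin_gt0_pi; rewrite /t; apply/andP; split; lra.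
have := cos2Dsin2 t; rewrite cos_pi3 !expr2 => h.
have := r2; have := r_gt0 => h1 h2.
have h3 : (sin t - r / 2) * (sin t + r / 2) = 0 by nra.
move/eqP: h3; rewrite mulf_eq0 => /orP [] /eqP h4; lra.
Qed.

Definition vx (k : nat) : pt R :=
  match k with
  | 0 => (2 / r, 0) | 1 => (1 / r, 1) | 2 => (- (1 / r), 1) | 3 => (- (2 / r), 0)
  | 4 => (- (1 / r), -1) | 5 => (1 / r, -1) | _ => (2 / r, 0) end.

Lemma hvertexE k : (k <= 6)%N -> hvertex R k = vx k.
Proof.
have pi0 := @pi_gt0 R; have rn := r_neq0.
have c3 := cos_pi3; have s3 := sin_pi3.
rewrite /hvertex /expi /pscale.
case: k => [|[|[|[|[|[|[|k]]]]]]] // _ /=.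
- rewrite mul0r mul0r cos0 sin0; by congr pair; field.
- rewrite !mul1r c3 s3; by congr pair; field.
- have -> : 2%:R * pi / 3 = pi - pi / 3 :> R by field.
  rewrite cosB sinB cospi sinpi c3 s3; by congr pair; field.
- have -> : 3%:R * pi / 3 = pi :> R by field.
  rewrite cospi sinpi; by congr pair; field.
- have -> : 4%:R * pi / 3 = pi + pi / 3 :> R by field.
  rewrite cosD sinD cospi sinpi c3 s3; by congr pair; field.
- have -> : 5%:R * pi / 3 = pi *+ 2 - pi / 3 :> R by rewrite mulr2n; field.
  rewrite cosB sinB cos2pi sin2pi c3 s3; by congr pair; field.
- have -> : 6%:R * pi / 3 = pi *+ 2 :> R by rewrite mulr2n; field.
  rewrite cos2pi sin2pi; by congr pair; field.
Qed.

Lemma cos_pi6 : cos (pi / 6 : R) = r / 2.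
Proof.
have -> : pi / 6 = pi / 2 - pi / 3 :> R by field.
by rewrite cosB cos_pihalf sin_pihalf sin_pi3 mul0r add0r mul1r.
Qed.
Lemma sin_pi6 : sin (pi / 6 : R) = 1 / 2.
Proof.
have -> : pi / 6 = pi / 2 - pi / 3 :> R by field.
by rewrite sinB cos_pihalf sin_pihalf cos_pi3 mul0r subr0 mul1r.
Qed.

Lemma Ldir0 : Ldir R 0 = (r / 2, 1 / 2) :> pt R.
Proof.
rewrite /Ldir /expi.
have -> : pi / 6 + 2 * 0%:R * pi / 3 = pi / 6 :> R by field.
by rewrite cos_pi6 sin_pi6.
Qed.

Lemma Ldir1 : Ldir R 1 = (- (r / 2), 1 / 2) :> pt R.
Proof.
rewrite /Ldir /expi.
have -> : pi / 6 + 2 * 1%:R * pi / 3 = pi - pi / 6 :> R by field.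
rewrite cosB sinB cospi sinpi cos_pi6 sin_pi6; by congr pair; ring.
Qed.

Lemma Ldir2 : Ldir R 2 = (0, -1) :> pt R.
Proof.
rewrite /Ldir /expi.
have -> : pi / 6 + 2 * 2%:R * pi / 3 = pi + pi / 2 :> R by field.
rewrite cosD sinD cospi sinpi cos_pihalf sin_pihalf; by congr pair; ring.
Qed.
Definition g (i : nat) (z : pt R) : R := pdot z (Ldir R i).
Lemma g0E z : g 0 z = r / 2 * z.1 + 1 / 2 * z.2. Proof. by rewrite /g Ldir0 /pdot /=; ring. Qed.
Lemma g1E z : g 1 z = - (r / 2) * z.1 + 1 / 2 * z.2. Proof. by rewrite /g Ldir1 /pdot /=; ring. Qed.
Lemma g2E z : g 2 z = - z.2. Proof. by rewrite /g Ldir2 /pdot /=; ring. Qed.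

Definition xt (z : pt R) : tri R := Tri (g 0 z) (g 1 z) (g 2 z).

Lemma xt_sub z w : xt (psub z w) = tsub (xt z) (xt w).
Proof. by rewrite /xt /tsub !(g0E, g1E, g2E) /=; congr Tri; ring. Qed.
Lemma xt_add z w : xt (padd z w) = Tri (a0 (xt z) + a0 (xt w)) (a1 (xt z) + a1 (xt w)) (a2 (xt z) + a2 (xt w)).
Proof. by rewrite /xt !(g0E, g1E, g2E) /=; congr Tri; ring. Qed.
Lemma xt_scale a z : xt (pscale a z) = tscale a (xt z).
Proof. by rewrite /xt /tscale !(g0E, g1E, g2E) /=; congr Tri; ring. Qed.

Lemma pdot_g z w : pdot z w = 2 / 3 * (g 0 z * g 0 w + g 1 z * g 1 w + g 2 z * g 2 w).
Proof.
rewrite !(g0E, g1E, g2E) /pdot.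
have h : r * r * (z.1 * w.1) = 3 * (z.1 * w.1) by rewrite r2.
lra.
Qed.

Lemma xt_inj z w : xt z = xt w -> z = w.
Proof.
case: z => z1 z2; case: w => w1 w2.
move=> /tri_eq [] /=; rewrite !(g0E, g1E, g2E) /= => h0 h1 h2.
have e2 : z2 = w2 by lra.
have : r * (z1 - w1) = 0 by lra.
move/eqP; rewrite mulf_eq0 (negbTE r_neq0) /= subr_eq0 => /eqP ->.
by rewrite e2.
Qed.

Definition tv (k : nat) : tri R :=
  match k with
  | 0 => Tri 1 (-1) 0 | 1 => Tri 1 0 (-1) | 2 => Tri 0 1 (-1) | 3 => Tri (-1) 1 0
  | 4 => Tri (-1) 0 1 | 5 => Tri 0 (-1) 1 | _ => Tri 1 (-1) 0 end.

Lemma xt_hv k : (k <= 6)%N -> xt (hvertex R k) = tv k.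
Proof.
move=> hk; rewrite hvertexE // /xt !(g0E, g1E, g2E).
have rn := r_neq0.
by case: k hk => [|[|[|[|[|[|[|k]]]]]]] // _ /=; congr Tri; field.
Qed.

Lemma onE_edge (k : 'I_6) P : edge_interior k P -> onE k (xt P).
Proof.
case=> s [hs ->].
have k6 : (k <= 6)%N by apply: ltnW.
rewrite xt_add xt_scale /edge_dir xt_sub !xt_hv //.
exists s; split => //.
by case: k k6 => [[|[|[|[|[|[|k]]]]]] hk] //= _; repeat split; ring.
Qed.

Lemma xt_reflect (k : 'I_6) d :
  xt (reflect_dir (edge_dir R k) d) = Sref k (xt d).
Proof.
have k6 : (k <= 6)%N by apply: ltnW.
have hw : xt (edge_dir R k) = tsub (tv k.+1) (tv k) by rewrite /edge_dir xt_sub !xt_hv.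
rewrite /reflect_dir xt_sub xt_scale !pdot_g.
have -> : g 0 (edge_dir R k) = a0 (xt (edge_dir R k)) by [].
have -> : g 1 (edge_dir R k) = a1 (xt (edge_dir R k)) by [].
have -> : g 2 (edge_dir R k) = a2 (xt (edge_dir R k)) by [].
rewrite hw /xt; clear hw.
move: (g 0 d) (g 1 d) (g 2 d) => c0 c1 c2.
rewrite /tscale /tsub /=.
by case: k k6 => [[|[|[|[|[|[|k]]]]]] hk] //= _; congr Tri; field.
Qed.
End Geo.

Section Geo2.
Variable R : realType.
Notation r := (Num.sqrt (3 : R)).
Lemma proj_itv k P Q :
  proj_bar k (segment P Q) =
  `[Num.max 0 (Num.min (pdot P (Ldir R k)) (pdot Q (Ldir R k))),
    Num.min 1 (Num.max (pdot P (Ldir R k)) (pdot Q (Ldir R k)))]%classic.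
Proof.
set a := pdot P (Ldir R k); set b := pdot Q (Ldir R k).
have lin s : pdot (padd P (pscale s (psub Q P))) (Ldir R k) = a + s * (b - a).
  by rewrite /a /b /pdot /padd /pscale /psub /=; ring.
apply/seteqP; split => t /=.
- move=> [/andP [t0 t1] [z [s [/andP [s0 s1] ez]] et]].
  rewrite ez lin in et.
  rewrite in_itv /= ge_max le_min ge_min le_max t0 t1 /=.
  case: (leP a b) => ab.
    by apply/andP; split; apply/orP; [left|right]; nra.
  by apply/andP; split; apply/orP; [right|left]; nra.
- rewrite in_itv /= ge_max le_min ge_min le_max => /andP [/andP [t0 h1] /andP [t1 h2]].
  split; first by rewrite t0 t1.
  case: (eqVneq a b) => ab.
    exists P; last first.
      move: h1 h2; rewrite -ab !orbb => h1 h2; apply/eqP; rewrite eq_le h1 h2.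
      by [].
    exists 0; split; first by rewrite lexx ler01.
    by rewrite /padd /pscale /= !mul0r !addr0; case: P {lin a ab h1 h2}.
  have ba : b - a != 0 by rewrite subr_eq0 eq_sym.
  exists (padd P (pscale ((t - a) / (b - a)) (psub Q P))); last first.
    by rewrite lin; field.
  exists ((t - a) / (b - a)); split => //.
  case: (ltP a b) => ab'.
  + have hba : 0 < b - a by rewrite subr_gt0.
    move: h1 h2 => /orP [h1|h1] /orP [h2|h2]; apply/andP; split;
      rewrite ?divr_ge0 ?ler_pdivrMr ?ler_pdivlMr // ?mul1r ?subr_ge0; lra.
  + have hba : b - a < 0 by rewrite subr_lt0 lt_neqAle eq_sym ab ab'.
    move: h1 h2 => /orP [h1|h1] /orP [h2|h2]; apply/andP; split;
      rewrite ?ler_ndivrMr ?ler_ndivlMr // ?mul0r ?mul1r; lra.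
Qed.
Lemma abs_tac1 (u : R) : 0 <= u -> `|u| = u. Proof. exact: ger0_norm. Qed.
Lemma abs_tac2 (u : R) : u <= 0 -> `|u| = - u. Proof. exact: ler0_norm. Qed.

Lemma meas_val (a b : R) : a <= 1 -> b <= 1 ->
  lebesgue_measure (`[Num.max 0 (Num.min a b), Num.min 1 (Num.max a b)]%classic : set R)
  = (`|mx b - mx a|)%:E.
Proof.
move=> a1 b1; rewrite lebesgue_measure_itv /= lte_fin /mx.
case: (leP a b) => ab; case: (leP 0 a) => a0; case: (leP 0 b) => b0;
case: (leP a 1) => a1'; case: (leP b 1) => b1'; try (exfalso; lra);
case: ltP => h; try (exfalso; lra); rewrite ?subr0 ?sub0r ?subrr ?normr0 //.
all: try (rewrite -EFinD; congr EFin;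
  first [rewrite abs_tac1; lra | rewrite abs_tac2; lra | rewrite normrN abs_tac1; lra]).
all: match goal with |- _ = EFin (@Num.norm _ _ ?u) => have -> : u = 0 by lra end; by rewrite normr0.
Qed.
Lemma seg_lengthE (P Q : pt R) kP kQ : onE kP (xt P) -> onE kQ (xt Q) ->
  seg_length P Q = (D (xt P) (xt Q))%:E.
Proof.
move=> /onE_bnd [/andP [_ p0] /andP [_ p1] /andP [_ p2] _].
move=> /onE_bnd [/andP [_ q0] /andP [_ q1] /andP [_ q2] _].
rewrite /seg_length !big_ord_recr big_ord0 /= add0e !proj_itv.
rewrite !meas_val //.
rewrite /D -!EFinD.
by rewrite (distrC (mx (a0 (xt P)))) (distrC (mx (a1 (xt P)))) (distrC (mx (a2 (xt P)))).
Qed.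
Lemma H_vert (y : R) : -1 <= y <= 1 -> H ((0, y) : pt R).
Proof.
move=> /andP [y0 y1].
pose lam := fun k : 'I_6 => match val k with 1 | 2 => (1 + y) / 4 | 4 | 5 => (1 - y) / 4 | _ => 0 end.
exists lam; split; [|split].
- by case=> [[|[|[|[|[|[|k]]]]]] hk] //=; rewrite /lam /=; lra.
- rewrite !big_ord_recr !big_ord0 /= /lam /=. lra.
- have e1 : \sum_(k < 6) lam k * (hvertex R k).1 = \sum_(k < 6) lam k * (vx R k).1.
    by apply: eq_bigr => k _; rewrite hvertexE // ltnW.
  have e2 : \sum_(k < 6) lam k * (hvertex R k).2 = \sum_(k < 6) lam k * (vx R k).2.
    by apply: eq_bigr => k _; rewrite hvertexE // ltnW.
  rewrite e1 e2.
  rewrite !big_ord_recr !big_ord0 /= /lam /=.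
  have rn := @r_neq0 R.
  by congr pair; field.
Qed.

Lemma xt_up : xt ((0, 1) : pt R) = Tri (1/2) (1/2) (-1).
Proof. by rewrite /xt g0E g1E g2E /=; congr Tri; ring. Qed.
Lemma xt_dn : xt ((0, -1) : pt R) = Tri (-(1/2)) (-(1/2)) 1.
Proof. by rewrite /xt g0E g1E g2E /=; congr Tri; ring. Qed.

Lemma vert_geo : restricted_closed_geodesic 2 (vertical_geodesic R).
Proof.
rewrite /restricted_closed_geodesic /vertical_geodesic.
have r0 := @r_gt0 R; have rn := @r_neq0 R.
split => //; split => //; split.
  by move=> j; rewrite addn2 /= negbK.
split.
  by move=> j /=; case: (odd j) => /= e; have := f_equal snd e => /= h; lra.
split.
  move=> j t [s [/andP [s0 s1] ->]]; rewrite /padd /pscale /psub /=.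
  case: (odd j) => /=; rewrite subrr mulr0 addr0; apply: H_vert; apply/andP; split; nra.
move=> j.
have e2 : odd j.+2 = odd j by rewrite /= negbK.
rewrite e2 /=.
case: (boolP (odd j)) => oj /=.
- exists (Ordinal (isT : (4 < 6)%N)); split.
    exists (1/2); split; first by apply/andP; split; lra.
    by rewrite /edge_dir !hvertexE //= /padd /pscale /psub /=; congr pair; field.
  exists 1 => //.
  apply: xt_inj; rewrite xt_scale xt_reflect !xt_sub xt_up xt_dn /=.
  by congr Tri; simpl; lra.
- exists (Ordinal (isT : (1 < 6)%N)); split.
    exists (1/2); split; first by apply/andP; split; lra.
    by rewrite /edge_dir !hvertexE //= /padd /pscale /psub /=; congr pair; field.
  exists 1 => //.
  apply: xt_inj; rewrite xt_scale xt_reflect !xt_sub xt_up xt_dn /=.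
  by congr Tri; simpl; lra.
Qed.

Lemma vert_len : geodesic_length 2 (vertical_geodesic R) = 4%:E.
Proof.
have hu : onE 1 (xt ((0, 1) : pt R)).
  rewrite xt_up; exists (1/2); split; first by apply/andP; split; lra.
  by rewrite /=; split; [|split]; lra.
have hd : onE 4 (xt ((0, -1) : pt R)).
  rewrite xt_dn; exists (1/2); split; first by apply/andP; split; lra.
  by rewrite /=; split; [|split]; lra.
rewrite /geodesic_length !big_ord_recr big_ord0 /= add0e /vertical_geodesic /=.
rewrite (seg_lengthE hd hu) (seg_lengthE hu hd) -EFinD xt_up xt_dn /D /mx /=.
congr EFin.
rewrite (max_l (_ : -(1/2) <= 0)) ?(max_r (_ : 0 <= 1/2)) ?(max_l (_ : -1 <= 0)) ?(max_r (_ : 0 <= 1)) //; try lra.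
rewrite !(sub0r, subr0, normrN) !ger0_norm; lra.
Qed.
Lemma lower (N : nat) (P : nat -> pt R) :
  restricted_closed_geodesic N P -> (4%:E <= geodesic_length N P)%E.
Proof.
case=> Npos [Neven [Nper [Pne [_ Hst]]]].
pose x := fun j => xt (P j).
have Hstep : forall j, exists k, onE k (x j.+1) /\ exists l, 0 < l /\
    tsub (x j.+2) (x j.+1) = tscale l (Sref k (tsub (x j.+1) (x j))).
  move=> j; case: (Hst j) => k [hk [l hl e]]; exists k; split; first exact: onE_edge.
  by exists l; split => //; rewrite /x -!xt_sub e xt_scale xt_reflect.
have xNper : forall j, x (j + N)%N = x j by move=> j; rewrite /x Nper.
have allE : forall j, exists k, onE k (x j).
  case=> [|j]; last by case: (Hstep j) => k [hk _]; exists k.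
  case: (Hstep N.-1) => k [hk _]; exists k.
  by rewrite -(xNper 0) add0n -(prednK Npos).
have Hne : forall j, x j <> x j.+1 by move=> j /xt_inj; exact: Pne.
have E : forall j, seg_length (P j) (P j.+1) = (D (x j) (x j.+1))%:E.
  move=> j; case: (allE j) => k1 h1; case: (allE j.+1) => k2 h2.
  exact: seg_lengthE h1 h2.
rewrite /geodesic_length (eq_bigr (fun j : 'I_N => (D (x j) (x j.+1))%:E)); last by move=> j _; exact: E.
rewrite sumEFin lee_fin.
exact: (main_abs Npos Neven xNper Hne Hstep).
Qed.
End Geo2.

Theorem proposition4p2 (R : realType) :
  (forall (N : nat) (P : nat -> pt R),
     restricted_closed_geodesic N P -> (4%:E <= geodesic_length N P)%E) /\
  (restricted_closed_geodesic 2 (@vertical_geodesic R) /\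
   geodesic_length 2 (@vertical_geodesic R) = 4%:E).
Proof.
split; first exact: lower.
split; [exact: vert_geo | exact: vert_len].
Qed.
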